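(* Let $M_{\mathrm{B_{vi}}}$ be the monoid with generators $a,b,c$ and relations $aba=bab$, $bcb=cbc$, $aca=bac$, $cab=bca$, $acb=cac$, $abb=bbc$, $bcca=ccac$, $bbac=caab$, $cbbb=bbba$, $acbcb=bccca$, $accbb=bccba$, $accaa=ccaac$, $caacc=aacca$, $acccc=bcccb$, $bbaac=cbaab$, $caaab=abaac$, $a^5=b^5$, $b^5=c^5$, $ccbaac=accbaa$; and let $M_{\mathrm{H_{iii}}}$ be the monoid with generators $a,b,c$ and relations $aba=bab$, $aca=cac$, $bcb=abc$, $cba=acb$, $bca=cbc$, $baa=aac$, $accb=ccbc$, $aabc=cbba$, $caaa=aaab$, $bcaca=acccb$, $bccaa=accab$, $bccbb=ccbbc$, $cbbcc=bbccb$, $bcccc=accca$, $aabbc=cabba$, $cbbba=babbc$, $a^5=b^5$, $b^5=c^5$, $ccabbc=bccabb$. Let $G_{\mathrm{B_{vi}}}$, $G_{\mathrm{H_{iii}}}$ be the groups with the same presentations and $G^+_{\mathrm{B_{vi}}}$, $G^+_{\mathrm{H_{iii}}}$ the submonoids generated by $a,b,c$. Then the correspondence $a\mapsto b$, $b\mapsto a$, $c\mapsto c$ induces a monoid isomorphism $M_{\mathrm{B_{vi}}}\cong M_{\mathrm{H_{iii}}}$, and hence also isomorphisms $G_{\mathrm{B_{vi}}}\cong G_{\mathrm{H_{iii}}}$ and $G^+_{\mathrm{B_{vi}}}\cong G^+_{\mathrm{H_{iii}}}$.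
   Context: A monoid given by generators and relations is the quotient of the free monoid on the generators by the congruence generated by the relations. *)

(* Defs.v *)
From Stdlib Require Import List.
Import ListNotations.

Inductive gen : Type := a | b | c.

(* The presented monoid is list T modulo this. *)
Inductive cong {T : Type} (R : list (list T * list T)) : list T -> list T -> Prop :=
| cong_rel : forall u v l r, In (l, r) R -> cong R (u ++ l ++ v) (u ++ r ++ v)
| cong_refl : forall w, cong R w w
| cong_sym : forall w1 w2, cong R w1 w2 -> cong R w2 w1
| cong_trans : forall w1 w2 w3, cong R w1 w2 -> cong R w2 w3 -> cong R w1 w3.

Definition pow5 (x : gen) : list gen := [x; x; x; x; x].

Definition rels_Bvi : list (list gen * list gen) := [
  ([a;b;a], [b;a;b]);
  ([b;c;b], [c;b;c]);
  ([a;c;a], [b;a;c]);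
  ([c;a;b], [b;c;a]);
  ([a;c;b], [c;a;c]);
  ([a;b;b], [b;b;c]);
  ([b;c;c;a], [c;c;a;c]);
  ([b;b;a;c], [c;a;a;b]);
  ([c;b;b;b], [b;b;b;a]);
  ([a;c;b;c;b], [b;c;c;c;a]);
  ([a;c;c;b;b], [b;c;c;b;a]);
  ([a;c;c;a;a], [c;c;a;a;c]);
  ([c;a;a;c;c], [a;a;c;c;a]);
  ([a;c;c;c;c], [b;c;c;c;b]);
  ([b;b;a;a;c], [c;b;a;a;b]);
  ([c;a;a;a;b], [a;b;a;a;c]);
  (pow5 a, pow5 b);
  (pow5 b, pow5 c);
  ([c;c;b;a;a;c], [a;c;c;b;a;a])
].

Definition rels_Hiii : list (list gen * list gen) := [
  ([a;b;a], [b;a;b]);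
  ([a;c;a], [c;a;c]);
  ([b;c;b], [a;b;c]);
  ([c;b;a], [a;c;b]);
  ([b;c;a], [c;b;c]);
  ([b;a;a], [a;a;c]);
  ([a;c;c;b], [c;c;b;c]);
  ([a;a;b;c], [c;b;b;a]);
  ([c;a;a;a], [a;a;a;b]);
  ([b;c;a;c;a], [a;c;c;c;b]);
  ([b;c;c;a;a], [a;c;c;a;b]);
  ([b;c;c;b;b], [c;c;b;b;c]);
  ([c;b;b;c;c], [b;b;c;c;b]);
  ([b;c;c;c;c], [a;c;c;c;a]);
  ([a;a;b;b;c], [c;a;b;b;a]);
  ([c;b;b;b;a], [b;a;b;b;c]);
  (pow5 a, pow5 b);
  (pow5 b, pow5 c);
  ([c;c;a;b;b;c], [b;c;c;a;b;b])
].

Definition swap_ab (x : gen) : gen :=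
  match x with a => b | b => a | c => c end.

(* Group presentations: the group with the same presentation is the monoid
   on letters x^{+1}, x^{-1} (pairs (x, false) = x, (x, true) = x^{-1}) with
   the relations R (on positive letters) together with x x^{-1} = 1 and
   x^{-1} x = 1 for every generator x. *)
Definition glet : Type := (gen * bool)%type.
Definition pos (w : list gen) : list glet := map (fun x => (x, false)) w.

Definition free_rels : list (list glet * list glet) :=
  flat_map (fun x => [([(x, false); (x, true)], []); ([(x, true); (x, false)], [])])
           [a; b; c].

Definition group_rels (R : list (list gen * list gen)) : list (list glet * list glet) :=
  map (fun p => (pos (fst p), pos (snd p))) R ++ free_rels.

Definition swap_glet (x : glet) : glet := (swap_ab (fst x), snd x).

(* Main.v *)
Require Import Defs.
From Stdlib Require Import List.
Import ListNotations.

Lemma rel_in {T} (R : list (list T * list T)) l r : In (l, r) R -> cong R l r.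
Proof. intro H. pose proof (cong_rel R [] [] l r H) as H'.
  simpl in H'. rewrite !app_nil_r in H'. exact H'. Qed.

Lemma cong_ctx {T} (R : list (list T * list T)) x y u v :
  cong R x y -> cong R (u ++ x ++ v) (u ++ y ++ v).
Proof.
  induction 1.
  - replace (u ++ (u0 ++ l ++ v0) ++ v) with ((u ++ u0) ++ l ++ (v0 ++ v))
      by (rewrite !app_assoc; reflexivity).
    replace (u ++ (u0 ++ r ++ v0) ++ v) with ((u ++ u0) ++ r ++ (v0 ++ v))
      by (rewrite !app_assoc; reflexivity).
    apply cong_rel; assumption.
  - apply cong_refl.
  - apply cong_sym; assumption.
  - eapply cong_trans; eassumption.
Qed.

Lemma cong_map {T U} (R1 : list (list T * list T)) (R2 : list (list U * list U))
  (f : T -> U) :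
  (forall l r, In (l, r) R1 -> cong R2 (map f l) (map f r)) ->
  forall x y, cong R1 x y -> cong R2 (map f x) (map f y).
Proof.
  intros Hf x y H; induction H.
  - rewrite !map_app. apply cong_ctx. apply Hf; assumption.
  - apply cong_refl.
  - apply cong_sym; assumption.
  - eapply cong_trans; eassumption.
Qed.

Ltac solve_rel :=
  first [ apply rel_in; simpl; tauto
        | apply cong_sym; apply rel_in; simpl; tauto
        | eapply cong_trans; [apply rel_in; simpl; tauto | apply rel_in; simpl; tauto]
        | apply cong_sym; eapply cong_trans; [apply rel_in; simpl; tauto | apply rel_in; simpl; tauto] ].

Ltac solve_all :=
  intros l r Hin; simpl in Hin;
  repeat (destruct Hin as [Hin|Hin]; [injection Hin as <- <-; simpl; solve_rel|]);
  destruct Hin.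

Lemma BH : forall l r, In (l, r) rels_Bvi -> cong rels_Hiii (map swap_ab l) (map swap_ab r).
Proof. solve_all. Qed.

Lemma HB : forall l r, In (l, r) rels_Hiii -> cong rels_Bvi (map swap_ab l) (map swap_ab r).
Proof. solve_all. Qed.

Lemma swap_inv w : map swap_ab (map swap_ab w) = w.
Proof. rewrite map_map. rewrite <- map_id. apply map_ext. intros []; reflexivity. Qed.

Lemma swapg_inv w : map swap_glet (map swap_glet w) = w.
Proof. rewrite map_map. rewrite <- map_id. apply map_ext. intros [[] ?]; reflexivity. Qed.

Lemma swap_pos w : map swap_glet (pos w) = pos (map swap_ab w).
Proof. unfold pos. rewrite !map_map. reflexivity. Qed.

Lemma pos_lift R x y : cong R x y -> cong (group_rels R) (pos x) (pos y).
Proof.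
  apply cong_map. intros l r H. apply rel_in. unfold group_rels.
  apply in_or_app. left. apply (in_map (fun p => (pos (fst p), pos (snd p))) R (l, r) H).
Qed.

Lemma group_map R1 R2 :
  (forall l r, In (l, r) R1 -> cong R2 (map swap_ab l) (map swap_ab r)) ->
  forall l r, In (l, r) (group_rels R1) ->
    cong (group_rels R2) (map swap_glet l) (map swap_glet r).
Proof.
  intros H l r Hin. unfold group_rels in Hin. apply in_app_or in Hin as [Hin|Hin].
  - apply in_map_iff in Hin as [[x y] [E Hp]]. injection E as <- <-. simpl.
    rewrite !swap_pos. apply pos_lift. apply H; assumption.
  - simpl in Hin.
    repeat (destruct Hin as [Hin|Hin]; [injection Hin as <- <-; simpl;
      apply rel_in; unfold group_rels; apply in_or_app; right; simpl; tauto|]).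
    destruct Hin.
Qed.

Theorem mainTheorem2 :
  (forall u v : list gen,
     cong rels_Bvi u v <-> cong rels_Hiii (map swap_ab u) (map swap_ab v)) /\
  (forall u v : list glet,
     cong (group_rels rels_Bvi) u v <->
     cong (group_rels rels_Hiii) (map swap_glet u) (map swap_glet v)) /\
  (forall u v : list gen,
     cong (group_rels rels_Bvi) (pos u) (pos v) <->
     cong (group_rels rels_Hiii) (pos (map swap_ab u)) (pos (map swap_ab v))).
Proof.
  assert (P2 : forall u v : list glet,
     cong (group_rels rels_Bvi) u v <->
     cong (group_rels rels_Hiii) (map swap_glet u) (map swap_glet v)).
  { intros u v; split.
    - apply cong_map, group_map, BH.
    - intro H. rewrite <- (swapg_inv u), <- (swapg_inv v).
      revert H. apply cong_map, group_map, HB. }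
  split; [|split].
  - intros u v; split.
    + apply cong_map, BH.
    + intro H. rewrite <- (swap_inv u), <- (swap_inv v). revert H. apply cong_map, HB.
  - exact P2.
  - intros u v. rewrite <- !swap_pos. apply P2.
Qed.
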